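(* Let $G$, $k\ge 3$, the choice strings $c_{i,j}$, $L=k+1$ and $d=k-2$ be as in the construction in the context, and let $s$ be a string of length $L$ such that every choice string $c_{i,j}$ ($1\le i<j\le k$) has a substring of length $L$ at Hamming distance at most $d$ from $s$. Then each of the first $k$ positions of $s$ holds an encoding symbol and the last position of $s$ holds the synchronizing symbol $\#$.
   Context: Let $G=(V,E)$ be an undirected simple graph with $V=\{v_1,\dots,v_n\}$ and edge set $E=\{e_1,\dots,e_m\}$, and let $k\ge 3$ be an integer; put $N=\binom{k}{2}$. The alphabet consists of pairwise distinct symbols: encoding symbols $\sigma_1,\dots,\sigma_n$, string identification symbols $\varphi_1,\dots,\varphi_N$, and a synchronizing symbol $\#$. Order the pairs $(i,j)$ with $1\le i<j\le k$ lexicographically, $(1,2),(1,3),\dots,(1,k),(2,3),\dots,(k-1,k)$, and let $i'$ denote the position of $(i,j)$ in this order. For an edge $e$ joining $v_r$ and $v_s$ with $r<s$ define $\mathrm{block}(i,j,e)=\varphi_{i'}^{\,i-1}\,\sigma_r\,\varphi_{i'}^{\,j-i-1}\,\sigma_s\,\varphi_{i'}^{\,k-j}\,\#$ (a string of length $k+1$), and the choice string $c_{i,j}=\mathrm{block}(i,j,e_1)\,\varphi_{i'}^{\,k}\,\mathrm{block}(i,j,e_2)\,\varphi_{i'}^{\,k}\cdots\varphi_{i'}^{\,k}\,\mathrm{block}(i,j,e_m)$. Set $L=k+1$ and $d=k-2$. *)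

(* Defs.v *)
From HB Require Import structures.
From mathcomp Require Import all_boot.
Set Implicit Arguments. Unset Strict Implicit. Unset Printing Implicit Defensive.

(* Alphabet for a graph on n vertices:
   Enc r   = encoding symbol sigma_{r+1}   (r : 'I_n, vertex v_{r+1})
   Phi p   = string identification symbol phi_p  (p meant to be in 1..N)
   Hash    = synchronizing symbol #
   Constructors are pairwise distinct, so all symbols are pairwise distinct. *)
Inductive Sym (n : nat) : Type :=
| Enc of 'I_n
| Phi of nat
| Hash.
Arguments Hash {n}.

Definition sym_eqb n (x y : Sym n) : bool :=
  match x, y with
  | Enc a, Enc b => a == b
  | Phi p, Phi q => p == q
  | Hash, Hash => true
  | _, _ => false
  end.

Lemma sym_eqP n : Equality.axiom (@sym_eqb n).
Proof.
move=> [a|p|] [b|q|] /=; try by constructor.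
- by apply: (iffP eqP) => [->|[]].
- by apply: (iffP eqP) => [->|[]].
Qed.

HB.instance Definition _ n := hasDecEq.Build (Sym n) (@sym_eqP n).

Definition in_alphabet n k (x : Sym n) : bool :=
  match x with
  | Phi p => (1 <= p <= 'C(k, 2))%N
  | _ => true
  end.

Definition is_enc n (x : Sym n) : bool :=
  if x is Enc _ then true else false.

(* position i' (1-based) of the pair (i,j), 1 <= i < j <= k, in the
   lexicographic order (1,2),(1,3),...,(1,k),(2,3),...,(k-1,k) *)
Definition pair_index (k i j : nat) : nat :=
  (\sum_(1 <= t < i) (k - t) + (j - i))%N.

Definition block n (k i j : nat) (e : 'I_n * 'I_n) : seq (Sym n) :=
  let ph := Phi n (pair_index k i j) in
  nseq (i - 1) ph ++ [:: Enc e.1] ++ nseq (j - i - 1) ph ++ [:: Enc e.2]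
    ++ nseq (k - j) ph ++ [:: Hash].

Definition choice_string n (k : nat) (E : seq ('I_n * 'I_n)) (i j : nat)
  : seq (Sym n) :=
  match E with
  | [::] => [::]
  | e1 :: rest =>
      block k i j e1 ++
      flatten [seq nseq k (Phi n (pair_index k i j)) ++ block k i j e | e <- rest]
  end.

(* Hamming distance of two strings (used for equal lengths) *)
Definition hamming n (s t : seq (Sym n)) : nat :=
  count (fun xy : Sym n * Sym n => xy.1 != xy.2) (zip s t).

Definition substring n (t c : seq (Sym n)) : Prop :=
  exists u w, c = u ++ t ++ w.

Definition simple_edge_list n (E : seq ('I_n * 'I_n)) : Prop :=
  uniq E /\ all (fun e : 'I_n * 'I_n => (e.1 < e.2)%N) E.

(* Main.v *)
Require Import Defs.
From mathcomp Require Import all_boot.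
From mathcomp Require Import zify.
Set Implicit Arguments. Unset Strict Implicit.

Lemma sub_in_count (T : eqType) (P Q : pred T) (l : seq T) :
  (forall x, x \in l -> P x -> Q x) -> count P l <= count Q l.
Proof.
elim: l => //= x l IH H.
rewrite leq_add //; last by apply: IH => y Hy; apply: H; rewrite in_cons Hy orbT.
by case: (P x) (H x (mem_head _ _)) => // ->.
Qed.

Section S.
Variables (n k i j : nat) (E : seq ('I_n * 'I_n)).
Hypotheses (Hi : 1 <= i) (Hij : i < j) (Hjk : j <= k).
Let p := pair_index k i j.
Definition piece (e : 'I_n * 'I_n) : seq (Sym n) :=
  nseq k (Phi n p) ++ block k i j e.

Lemma size_piece e : size (piece e) = (k + k).+1.
Proof. rewrite /piece /block /= !size_cat !size_nseq /= size_cat size_nseq /= size_cat size_nseq /=. lia. Qed.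

Lemma nth_piece e r : r < (k + k).+1 ->
  nth Hash (piece e) r =
  if r == k + i - 1 then Enc e.1 else if r == k + j - 1 then Enc e.2
  else if r == k + k then Hash else Phi n p.
Proof.
move=> Hr; rewrite /piece /block -/p.
rewrite nth_cat size_nseq nth_nseq.
case: (ltnP r k) => H1.
  have -> : (r == k + i - 1) = false by apply/eqP; lia.
  have -> : (r == k + j - 1) = false by apply/eqP; lia.
  by have -> : (r == k + k) = false by apply/eqP; lia.
rewrite nth_cat size_nseq nth_nseq.
case: (ltnP (r - k) (i - 1)) => H2.
  have -> : (r == k + i - 1) = false by apply/eqP; lia.
  have -> : (r == k + j - 1) = false by apply/eqP; lia.
  by have -> : (r == k + k) = false by apply/eqP; lia.
rewrite -cat1s nth_cat /=.
case: (ltnP (r - k - (i - 1)) 1) => H3.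
  have -> : r - k - (i - 1) = 0 by lia.
  by have -> : (r == k + i - 1) = true by apply/eqP; lia.
have -> : (r == k + i - 1) = false by apply/eqP; lia.
rewrite nth_cat size_nseq nth_nseq.
case: (ltnP (r - k - (i - 1) - 1) (j - i - 1)) => H4.
  have -> : (r == k + j - 1) = false by apply/eqP; lia.
  by have -> : (r == k + k) = false by apply/eqP; lia.
rewrite -cat1s nth_cat /=.
case: (ltnP (r - k - (i - 1) - 1 - (j - i - 1)) 1) => H5.
  have -> : r - k - (i - 1) - 1 - (j - i - 1) = 0 by lia.
  by have -> : (r == k + j - 1) = true by apply/eqP; lia.
have -> : (r == k + j - 1) = false by apply/eqP; lia.
rewrite nth_cat size_nseq nth_nseq.
case: (ltnP (r - k - (i - 1) - 1 - (j - i - 1) - 1) (k - j)) => H6.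
  by have -> : (r == k + k) = false by apply/eqP; lia.
have -> : (r == k + k) = true by apply/eqP; lia.
have -> : r - k - (i - 1) - 1 - (j - i - 1) - 1 - (k - j) = 0 by lia.
by [].
Qed.

Lemma nth_flat (Es : seq ('I_n * 'I_n)) A r : r < (k + k).+1 -> A < size Es ->
  exists e, nth Hash (flatten [seq piece e | e <- Es]) (A * (k + k).+1 + r)
            = nth Hash (piece e) r.
Proof.
move=> Hr; elim: Es A => [|e Es IH] A //= HA.
rewrite nth_cat size_piece.
case: A HA => [|A] HA.
  by rewrite mul0n add0n Hr; exists e.
rewrite ifF; last by lia.
have -> : A.+1 * (k + k).+1 + r - (k + k).+1 = A * (k + k).+1 + r by rewrite mulSn; lia.
exact: IH.
Qed.

Lemma cs_eq e1 rest : choice_string k (e1 :: rest) i j =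
  drop k (flatten [seq piece e | e <- e1 :: rest]).
Proof.
rewrite /= /piece -catA drop_size_cat ?size_nseq //.
Qed.


Lemma size_flat (Es : seq ('I_n * 'I_n)) :
  size (flatten [seq piece e | e <- Es]) = size Es * (k + k).+1.
Proof. by elim: Es => //= e Es IH; rewrite size_cat IH size_piece mulSn. Qed.

Definition is_phi (x : Sym n) : bool := if x is Phi _ then true else false.

Lemma window t : substring t (choice_string k E i j) -> size t = k.+1 ->
  exists2 o, o < (k + k).+1 & forall q, q < k.+1 ->
   exists e, nth Hash t q = nth Hash (piece e)
       (if o + q < (k + k).+1 then o + q else o + q - (k + k).+1).
Proof.
rewrite /substring; move=> [U [W HUW]] Ht; case: E HUW => [|e1 rest] HUW.
  by move: (congr1 size HUW); rewrite /= !size_cat Ht; lia.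
rewrite cs_eq in HUW.
set L := (k + k).+1.
have HL : 0 < L by [].
exists ((k + size U) %% L); first by rewrite ltn_mod.
move=> q Hq.
have Hsz : k + (size U + q) < size (flatten [seq piece e | e <- e1 :: rest]).
  move: (congr1 size HUW); rewrite size_drop !size_cat Ht; lia.
have -> : nth Hash t q = nth Hash (flatten [seq piece e | e <- e1 :: rest]) (k + (size U + q)).
  by rewrite -nth_drop HUW nth_cat ltnNge leq_addr /= addKn nth_cat Ht Hq.
move: Hsz; rewrite size_flat.
have Hdm := divn_eq (k + size U) L.
have Hlt := ltn_mod (k + size U) L.
set A := (k + size U) %/ L in Hdm *.
set o := (k + size U) %% L in Hdm Hlt *.
move=> Hsz.
case: ifP => Hoq.
  have -> : k + (size U + q) = A * L + (o + q) by lia.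
  apply: nth_flat => //.
  rewrite ltnNge; apply/negP => HA.
  have : size (e1 :: rest) * L <= A * L by rewrite leq_mul2r HA orbT.
  lia.
have -> : k + (size U + q) = A.+1 * L + (o + q - L) by rewrite mulSn; lia.
apply: nth_flat; first by lia.
rewrite ltnNge; apply/negP => HA.
have : size (e1 :: rest) * L <= A.+1 * L by rewrite leq_mul2r HA orbT.
rewrite mulSn; lia.
Qed.


Lemma piece_cls e r : r < (k + k).+1 ->
  [/\ (nth Hash (piece e) r == Phi n p) || ~~ is_phi (nth Hash (piece e) r),
      ~~ is_phi (nth Hash (piece e) r) -> [|| r == k + i - 1, r == k + j - 1 | r == k + k],
      r = k + k -> nth Hash (piece e) r = Hash &
      (r = k + i - 1) \/ (r = k + j - 1) -> is_enc (nth Hash (piece e) r)].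
Proof.
move=> Hr; rewrite nth_piece //.
case E1: (r == k + i - 1); [|case E2: (r == k + j - 1); [|case E3: (r == k + k)]]; split => //=; rewrite ?E1 ?E2 ?E3 ?orbT //; try (move=> HH; exfalso; move: HH E1 E2 E3; rewrite ?/eqP; lia); try (move=> HH; exfalso; move: HH E1 E2; rewrite ?/eqP; lia). all: try by rewrite eqxx. all: move=> HH; move/eqP: E1; lia.
Qed.

Lemma ham_nth (s t : seq (Sym n)) : size s = size t ->
  hamming s t = count (fun q => nth Hash s q != nth Hash t q) (iota 0 (size s)).
Proof.
move=> Hst; rewrite /hamming -(mkseq_nth (Hash, Hash) (zip s t)) size_zip Hst minnn.
rewrite /mkseq count_map -Hst; apply: eq_in_count => q _ /=.
by rewrite nth_zip.
Qed.

Lemma count_nth (P : pred (Sym n)) (s : seq (Sym n)) :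
  count P s = count (fun q => P (nth Hash s q)) (iota 0 (size s)).
Proof. by rewrite -{1}(mkseq_nth Hash s) /mkseq count_map. Qed.

Lemma matches3 (s t : seq (Sym n)) : size s = k.+1 -> size t = k.+1 ->
  hamming s t <= k - 2 -> 3 <= k ->
  3 <= count (fun q => nth Hash s q == nth Hash t q) (iota 0 k.+1).
Proof.
move=> Hs Ht Hh Hk; move: Hh; rewrite ham_nth ?Hs ?Ht //.
have := count_predC (fun q => nth Hash s q == nth Hash t q) (iota 0 k.+1).
rewrite size_iota.
have -> : count (predC (fun q => nth Hash s q == nth Hash t q)) (iota 0 k.+1)
  = count (fun q => nth Hash s q != nth Hash t q) (iota 0 k.+1) by [].
lia.
Qed.

Lemma F1 (s t : seq (Sym n)) : substring t (choice_string k E i j) ->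
  size s = k.+1 -> size t = k.+1 -> hamming s t <= k - 2 -> 3 <= k ->
  3 <= count (pred1 (Phi n p)) s + count (fun x => ~~ is_phi x) s.
Proof.
move=> Hsub Hs Ht Hh Hk.
have [o Ho Hw] := window Hsub Ht.
have H3 := matches3 Hs Ht Hh Hk.
have : count (fun q => nth Hash s q == nth Hash t q) (iota 0 k.+1) <=
       count (fun x => (x == Phi n p) || ~~ is_phi x) s.
  rewrite count_nth Hs; apply: sub_in_count => q; rewrite mem_iota => /andP [_ Hq] /=.
  move/eqP => ->.
  have [e ->] := Hw q Hq.
  by case: (piece_cls e (r := if o + q < (k + k).+1 then o + q else o + q - (k + k).+1) _) => //; case: ifP => //; lia.
have := count_predUI (pred1 (Phi n p)) (fun x => ~~ is_phi x) s.
have -> : count (predU (pred1 (Phi n p)) (fun x => ~~ is_phi x)) s = 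
   count (fun x => (x == Phi n p) || ~~ is_phi x) s by [].
move=> HUI HC; apply: leq_trans H3 _; apply: leq_trans HC _; rewrite -HUI; exact: leq_addr.
Qed.


Lemma F3 (s t : seq (Sym n)) : substring t (choice_string k E i j) ->
  size s = k.+1 -> size t = k.+1 -> hamming s t <= k - 2 -> 3 <= k ->
  count (pred1 (Phi n p)) s = 0 ->
  exists o', [/\ o' <= i - 1, nth Hash s (k - o') = Hash,
     is_enc (nth Hash s (i - 1 - o')) & is_enc (nth Hash s (j - 1 - o'))].
Proof.
move=> Hsub Hs Ht Hh Hk H0.
have [o Ho Hw] := window Hsub Ht.
have H3 := matches3 Hs Ht Hh Hk.
pose M q := (q < k.+1) && (nth Hash s q == nth Hash t q).
have HM : 3 <= count M (iota 0 k.+1).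
  apply: leq_trans H3 _; rewrite leq_eqVlt; apply/orP; left; apply/eqP.
  by apply: eq_in_count => q; rewrite mem_iota /M => /andP [_ ->].
have key : forall q, M q -> o + q < (k + k).+1 /\
    [|| o + q == k + i - 1, o + q == k + j - 1 | o + q == k + k].
  move=> q /andP [Hq /eqP Heq].
  have [e He] := Hw q Hq.
  set R := (if o + q < (k + k).+1 then o + q else o + q - (k + k).+1) in He.
  have HR : R < (k + k).+1 by rewrite /R; case: ifP => H'; lia.
  have [Ha Hb _ _] := piece_cls e HR.
  have Hnp : ~~ is_phi (nth Hash (piece e) R).
    case/orP: Ha => // /eqP HP.
    exfalso; move: H0; apply/eqP; rewrite -lt0n -has_count; apply/hasP.
    by exists (nth Hash s q); [apply: mem_nth; rewrite Hs | rewrite /= Heq He HP].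
  move: (Hb Hnp); rewrite /R; case: ifP => Hlt H; [by split | exfalso; move: H].
  case/or3P => /eqP; lia.
pose a := if o <= k + i - 1 then k + i - 1 - o else k.+1.
pose b := if o <= k + j - 1 then k + j - 1 - o else k.+1.
pose c := k + k - o.
have Hsubset : forall q, M q -> q \in [:: a; b; c].
  move=> q Mq; have [Hl H] := key q Mq.
  rewrite !inE /a /b /c.
  case/or3P: H => /eqP H.
  - have Ha' : o <= k + i - 1 by lia.
    by rewrite Ha'; apply/orP; left; apply/eqP; lia.
  - have Hb' : o <= k + j - 1 by lia.
    by rewrite Hb'; apply/orP; right; apply/orP; left; apply/eqP; lia.
  - by apply/orP; right; apply/orP; right; apply/eqP; lia.
have Hcnt : count M (iota 0 k.+1) <= M a + (M b + (M c + 0)).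
  rewrite -size_filter.
  have U : uniq (filter M (iota 0 k.+1)) by rewrite filter_uniq // iota_uniq.
  have Sub : {subset filter M (iota 0 k.+1) <= filter M [:: a; b; c]}.
    move=> x; rewrite !mem_filter => /andP [Mx _]; rewrite Mx /=.
    exact: Hsubset.
  apply: leq_trans (uniq_leq_size U Sub) _.
  by rewrite size_filter /=.
have Ma : M a by move: Hcnt HM; case: (M a); case: (M b); case: (M c) => //=; lia.
have Mb : M b by move: Hcnt HM; case: (M a); case: (M b); case: (M c) => //=; lia.
have Mc : M c by move: Hcnt HM; case: (M a); case: (M b); case: (M c) => //=; lia.
have Hoa : o <= k + i - 1.
  move: Ma; rewrite /M /a; case: ifP => // _; by rewrite ltnn.
have Hob : o <= k + j - 1 by lia.
have Hoc : k <= o.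
  move: Mc; rewrite /M /c => /andP [Hc _]; lia.
exists (o - k).
have -> : k - (o - k) = c by rewrite /c; lia.
have -> : i - 1 - (o - k) = a by rewrite /a ifT //; lia.
have -> : j - 1 - (o - k) = b by rewrite /b ifT //; lia.
have Hget : forall q, M q -> forall e, nth Hash t q = nth Hash (piece e) (o + q) ->
   nth Hash s q = nth Hash (piece e) (o + q).
  by move=> q /andP [_ /eqP ->].
split; first lia.
- move: (Mc) => /andP [Hq _]; have [e He] := Hw c Hq.
  rewrite ifT in He; last by rewrite /c; lia.
  rewrite (Hget c Mc e He).
  have [_ _ Hc _] := piece_cls e (r := o + c) (ltac:(rewrite /c; lia)).
  by apply: Hc; rewrite /c; lia.
- move: (Ma) => /andP [Hq _]; have [e He] := Hw a Hq.
  rewrite ifT in He; last by rewrite /a ifT; lia.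
  rewrite (Hget a Ma e He).
  have [_ _ _ Hc] := piece_cls e (r := o + a) (ltac:(rewrite /a ifT; lia)).
  by apply: Hc; left; rewrite /a ifT; lia.
- move: (Mb) => /andP [Hq _]; have [e He] := Hw b Hq.
  rewrite ifT in He; last by rewrite /b ifT; lia.
  rewrite (Hget b Mb e He).
  have [_ _ _ Hc] := piece_cls e (r := o + b) (ltac:(rewrite /b ifT; lia)).
  by apply: Hc; right; rewrite /b ifT; lia.
Qed.

End S.
Unset Implicit Arguments.
Set Strict Implicit.

Lemma sum_bool (S : seq nat) (F : pred nat) : \sum_(p <- S) (F p : nat) = count F S.
Proof. by elim: S => [|x S IH]; rewrite ?big_nil ?big_cons ?IH. Qed.

Lemma sum_const (S : seq nat) c : \sum_(p <- S) c = size S * c.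
Proof. by elim: S => [|x S IH]; rewrite ?big_nil ?big_cons ?IH //= mulSn. Qed.

Lemma sum_cnt n (S : seq nat) (s : seq (Sym n)) : uniq S ->
  \sum_(p <- S) count (pred1 (Phi n p)) s <= count (@is_phi n) s.
Proof.
move=> U; elim: s => [|y s IH] /=; first by rewrite big1.
rewrite (eq_bigr (fun p => (y == Phi n p) + count (pred1 (Phi n p)) s)) // big_split /=.
rewrite addnC [X in _ <= X]addnC leq_add //.
case: y => [a|q|] /=.
- by rewrite big1.
- have -> : \sum_(p <- S) (Phi n q == Phi n p : nat) = \sum_(p <- S) ((pred1 q) p : nat).
    by apply: eq_bigr => p _ /=; rewrite eq_sym.
  by rewrite sum_bool count_uniq_mem //; case: (q \in S).
- by rewrite big1.
Qed.

Lemma pi1 k j : pair_index k 1 j = j - 1.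
Proof. by rewrite /pair_index big_geq. Qed.

Lemma pi2 k j : pair_index k 2 j = k - 1 + (j - 2).
Proof. by rewrite /pair_index big_nat1. Qed.

Theorem lemma2 (n k : nat) (E : seq ('I_n * 'I_n)) (s : seq (Sym n)) :
  simple_edge_list E ->
  (3 <= k)%N ->
  all (in_alphabet k) s ->
  size s = k.+1 ->
  (forall i j : nat, (1 <= i)%N -> (i < j)%N -> (j <= k)%N ->
     exists t : seq (Sym n),
       substring t (choice_string k E i j) /\ size t = k.+1 /\
       (hamming s t <= k - 2)%N) ->
  (forall p : nat, (p < k)%N -> is_enc (nth Hash s p)) /\ nth Hash s k = Hash.
Proof.
move=> _ Hk _ Hs Hpair.
pose cnt p := count (pred1 (Phi n p)) s.
pose x := count (fun y => ~~ @is_phi n y) s.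
pose f := count (@is_phi n) s.
have Hxf : f + x = k.+1.
  by rewrite -Hs /f /x -(count_predC (@is_phi n) s).
have PF1 : forall i j, 1 <= i -> i < j -> j <= k -> 3 <= cnt (pair_index k i j) + x.
  move=> i j Hi Hij Hjk; have [t [Hsub [Ht Hh]]] := Hpair i j Hi Hij Hjk.
  exact: (F1 Hi Hij Hjk Hsub Hs Ht Hh Hk).
have PF3 : forall i j, 1 <= i -> i < j -> j <= k -> cnt (pair_index k i j) = 0 ->
  exists o', [/\ o' <= i - 1, nth Hash s (k - o') = Hash,
     is_enc (nth Hash s (i - 1 - o')) & is_enc (nth Hash s (j - 1 - o'))].
  move=> i j Hi Hij Hjk H0; have [t [Hsub [Ht Hh]]] := Hpair i j Hi Hij Hjk.
  exact: (F3 Hi Hij Hjk Hsub Hs Ht Hh Hk H0).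
pose S1 := iota 1 (k - 1).
pose S2 := iota k (k - 2).
have HS : \sum_(p <- S1) cnt p + \sum_(p <- S2) cnt p <= f.
  rewrite -big_cat /S1 /S2.
  have -> : iota 1 (k - 1) ++ iota k (k - 2) = iota 1 (k - 1 + (k - 2)).
    by rewrite iotaD; have -> : 1 + (k - 1) = k by lia.
  apply: sum_cnt; exact: iota_uniq.
have I1 : forall p, p \in S1 -> cnt p = cnt (pair_index k 1 p.+1).
  by move=> p _; rewrite pi1 subn1.
have I1' : forall p, p \in S1 -> 1 < p.+1 <= k.
  by move=> p; rewrite mem_iota; lia.
have I2 : forall p, p \in S2 -> cnt p = cnt (pair_index k 2 (p - k + 3)) /\ 2 < p - k + 3 <= k.
  by move=> p; rewrite mem_iota pi2 => Hp; split; [congr cnt; lia | lia].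
case: (boolP (all (fun q => 0 < cnt q) S1)) => [/allP Hall | /allPn [q0 Hq0 Hc0]].
-
  exfalso.
  have A1 : k - 1 <= \sum_(p <- S1) cnt p.
    have -> : k - 1 = \sum_(p <- S1) 1 by rewrite sum1_size size_iota.
    by rewrite big_seq [X in _ <= X]big_seq; apply: leq_sum => p Hp; apply: Hall.
  have Hx : x <= 2 by lia.
  have A2 : \sum_(p <- S1) (3 - x) + \sum_(p <- S2) (3 - x) <= f.
    apply: leq_trans HS; apply: leq_add.
      rewrite big_seq [X in _ <= X]big_seq; apply: leq_sum => p Hp.
      rewrite I1 //; have := PF1 1 p.+1 (leqnn 1); have := I1' p Hp; lia.
    rewrite big_seq [X in _ <= X]big_seq; apply: leq_sum => p Hp.
    have [-> H2] := I2 p Hp; have := PF1 2 (p - k + 3) (ltnW (ltnSn 1)); lia.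
  move: A2; rewrite !sum_const !size_iota.
  have : x = 0 \/ x = 1 \/ x = 2 by lia.
  case=> [Hx0|[Hx0|Hx0]]; rewrite Hx0 in Hxf *; nia.
-
  have [j0 [Hj0a Hj0b]] : exists j0, 1 < j0 /\ j0 <= k by exists 2; lia.
  have Hq0' := I1' q0 Hq0.
  have [o [Ho Hhk H0enc _]] : exists o', [/\ o' <= 1 - 1, nth Hash s (k - o') = Hash,
     is_enc (nth Hash s (1 - 1 - o')) & is_enc (nth Hash s (q0.+1 - 1 - o'))].
    apply: PF3; try lia; rewrite -I1 //; lia.
  have o0 : o = 0 by lia.
  rewrite o0 subn0 in Hhk; rewrite o0 /= in H0enc.
  pose B := count (fun q => ~~ is_enc (nth Hash s q)) S1.
  pose Hc := count (fun q => nth Hash s q == Hash) S1.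
  have HB : B <= \sum_(p <- S1) cnt p.
    rewrite /B -sum_bool big_seq [X in _ <= X]big_seq; apply: leq_sum => q Hq.
    case: (boolP (is_enc (nth Hash s q))) => //= Hne.
    rewrite lt0n; apply/negP => /eqP Hc0'.
    have := I1' q Hq => Hq'.
    have [o' [Ho' _ _ He]] := PF3 1 q.+1 (leqnn 1) (ltac:(lia)) (ltac:(lia)) (ltac:(rewrite -I1 //)).
    have Eo : o' = 0 by lia.
    by rewrite Eo subn1 subn0 /= in He; rewrite He in Hne.
  have Hf : f = count (fun q => is_phi (nth Hash s q)) S1.
    rewrite /f count_nth Hs.
    have -> : k.+1 = 1 + ((k - 1) + 1) by lia.
    rewrite iotaD iotaD count_cat count_cat /=.
    have -> : 0 + 1 + (k - 1) = k by lia.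
    rewrite Hhk; case: (nth Hash s 0) H0enc => //= _.
    by rewrite !addn0.
  have HBf : B = f + Hc.
    rewrite Hf /B /Hc -!sum_bool -big_split /=; apply: eq_bigr => q _.
    by case: (nth Hash s q).
  have HS2 : \sum_(p <- S2) cnt p = 0 by lia.
  have HHc : Hc = 0 by lia.
  have H2j : forall j, 2 < j <= k -> is_enc (nth Hash s 1) && is_enc (nth Hash s (j - 1)).
    move=> j Hj.
    have Hc2 : cnt (pair_index k 2 j) = 0.
      have Hp : k - 1 + (j - 2) \in S2 by rewrite mem_iota; lia.
      move/eqP: HS2; rewrite sum_nat_seq_eq0 => /allP /(_ _ Hp) /eqP.
      by rewrite pi2.
    have [o' [Ho' Hh' Ha Hb]] := PF3 2 j (ltnW (ltnSn 1)) (ltac:(lia)) (ltac:(lia)) Hc2.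
    case: o' Ho' Hh' Ha Hb => [|o'] Ho' Hh' Ha Hb.
      by rewrite !subn0 in Ha Hb; rewrite Ha Hb.
    exfalso.
    have Hk1 : k - 1 \in S1 by rewrite mem_iota; lia.
    have : 0 < Hc.
      rewrite /Hc -has_count; apply/hasP; exists (k - 1) => //.
      have Eo : o' = 0 by lia.
      by rewrite Eo in Hh'; rewrite Hh'.
    lia.
  split => // p Hp.
  case: p Hp => [|[|p]] Hp //.
    by case/andP: (H2j 3 (ltac:(lia))).
  case/andP: (H2j p.+3 (ltac:(lia))) => _.
  by rewrite subn1.
Qed.
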